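(* Let $T=(V,E,\rho,\ell)$ be a tree with $|\partial T|\ge2$ and let $(X_\gamma)_{\gamma\in\Gamma_T}$ be a $\mathbf{P}_t$-chain on $T$. For $j\in\mathcal{S}$ let $N_j$ be the number of leaves of $T$ in state $j$. Then for all $i,j\in\mathcal{S}$, $$\mathrm{var}_i(N_j)\le\frac14|\partial T|+2(q_i\vee1)\,\mathrm{Spr}(T)\,|\partial T|^2,$$ where $\mathrm{var}_i$ denotes variance under $\mathbb{P}^i$.
   Context: A tree $T=(V,E,\rho,\ell)$ is a finite rooted tree with positive edge lengths, viewed as a metric object with point set $\Gamma_T$ and leaf set $\partial T$. Markov process on countable $\mathcal{S}$ with transition matrices $\mathbf{P}_t=(p_{ij}(t))$ and stable conservative $Q$-matrix, $q_i=-q_{ii}=\sum_{j\ne i}q_{ij}<\infty$. A $\mathbf{P}_t$-chain on $T$: root state $X_\rho$, then along each edge $(u,v)$ run the chain from $X_u$ for time $\ell_{(u,v)}$, independently on outgoing edges given the branching state; $\mathbb{P}^i$ is the law with $X_\rho=i$. Spread: $\ell_{xy}$ is the length of the common part of the paths from $\rho$ to leaves $x$ and $y$, and $\mathrm{Spr}(T)=\frac{\sum_{x\ne y}(\ell_{xy}\wedge1)}{|\partial T|(|\partial T|-1)}$ (sum over ordered pairs of distinct leaves). *)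

(* Defs.v *)
From Stdlib Require Import Reals Lra List Classical ClassicalEpsilon.
Import ListNotations.
Open Scope R_scope.

Definition ind (P : Prop) : R :=
  if excluded_middle_informative P then 1 else 0.

Definition fsum {A : Type} (f : A -> R) (l : list A) : R :=
  fold_right (fun a acc => f a + acc) 0 l.

(** [has_sum f v]: the (unordered) sum over the whole type [A] of the
    NONNEGATIVE family [f] is [v], i.e. [v] is the supremum of the sums over
    finite sets of distinct indices. *)
Definition has_sum {A : Type} (f : A -> R) (v : R) : Prop :=
  is_lub (fun r => exists l : list A, NoDup l /\ r = fsum f l) v.

(** The sum of a nonnegative family (0 if it diverges; never used then). *)
Definition tsum {A : Type} (f : A -> R) : R :=
  match excluded_middle_informative (exists v, has_sum f v) with
  | left H => proj1_sig (constructive_indefinite_description _ H)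
  | right _ => 0
  end.

Definition countable (S : Type) : Prop :=
  exists f : S -> nat, forall a b, f a = f b -> a = b.

Record transition_function {S : Type} (p : R -> S -> S -> R) : Prop := {
  tf_nonneg : forall t a b, 0 <= t -> 0 <= p t a b;
  tf_stoch : forall t a, 0 <= t -> has_sum (p t a) 1;
  tf_init : forall a b, p 0 a b = ind (a = b);
  tf_CK : forall s t a b, 0 <= s -> 0 <= t ->
            has_sum (fun m => p s a m * p t m b) (p (s + t) a b)
}.

(** [Q] is the Q-matrix of [p] (Q = P'(0+)), and it is stable (finite
    entries, automatic for real values) and conservative. *)
Definition qmatrix_of {S : Type} (p : R -> S -> S -> R) (Q : S -> S -> R) : Prop :=
  (forall a b, forall eps, 0 < eps -> exists delta, 0 < delta /\
      forall h, 0 < h < delta ->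
        Rabs ((p h a b - p 0 a b) / h - Q a b) < eps) /\
  (forall a, has_sum (fun b => if excluded_middle_informative (a = b)
                               then 0 else Q a b) (- Q a a)).

(** Finite rooted trees: a node with its list of (edge length, child subtree).
    Leaves are the childless nodes. *)
Inductive tree : Type := Node : list (R * tree) -> tree.

Fixpoint pos_lengths (t : tree) : Prop :=
  match t with
  | Node cs =>
      (fix go (cs : list (R * tree)) : Prop :=
         match cs with
         | [] => True
         | (l, c) :: r => 0 < l /\ pos_lengths c /\ go r
         end) cs
  end.

Fixpoint nleaves (t : tree) : nat :=
  match t with
  | Node cs =>
      match cs with
      | [] => 1%nat
      | _ => (fix go (cs : list (R * tree)) : nat :=
                match cs with
                | [] => 0%nat
                | (_, c) :: r => (nleaves c + go r)%nat
                end) cs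
      end
  end.

(** Leaves, each given by its path from the root:
    list of (child index, edge length).  Ordered left to right. *)
Fixpoint leaves (t : tree) : list (list (nat * R)) :=
  match t with
  | Node cs =>
      match cs with
      | [] => [[]]
      | _ => (fix go (n : nat) (cs : list (R * tree)) : list (list (nat * R)) :=
                match cs with
                | [] => []
                | (l, c) :: r => map (cons (n, l)) (leaves c) ++ go (Datatypes.S n) r
                end) 0%nat cs
      end
  end.

Fixpoint common_length (a b : list (nat * R)) : R :=
  match a, b with
  | (n, l) :: a', (m, _) :: b' =>
      if Nat.eq_dec n m then l + common_length a' b' else 0
  | _, _ => 0
  end.

Definition spread (t : tree) : R :=
  let L := leaves t in
  let n := length L in
  fsum (fun x => fsum (fun y =>
          if Nat.eq_dec x y then 0
          else Rmin (common_length (nth x L []) (nth y L [])) 1)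
        (seq 0 n)) (seq 0 n)
  / (INR n * (INR n - 1)).

(** Law of the leaf states of a P_t-chain on [t] started at root state [k]:
    [leaf_law p t k σ] = P^k((X_x)_{x ∈ ∂t} = σ), leaves listed in the order
    of [leaves t].  Along each edge (u,v) the chain runs for time ℓ_{(u,v)}
    from X_u, independently on the different outgoing edges given X_u;
    internal states are summed out. *)
Fixpoint leaf_law {S : Type} (p : R -> S -> S -> R) (t : tree) (k : S)
    (σ : list S) : R :=
  match t with
  | Node cs =>
      match cs with
      | [] => match σ with [x] => ind (x = k) | _ => 0 end
      | _ => (fix go (cs : list (R * tree)) (σ : list S) : R :=
                match cs with
                | [] => match σ with [] => 1 | _ => 0 end
                | (l, c) :: r =>
                    tsum (fun s => p l k s * leaf_law p c s (firstn (nleaves c) σ))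
                    * go r (skipn (nleaves c) σ)
                end) cs σ
      end
  end.

Definition Ncount {S : Type} (j : S) (σ : list S) : R := fsum (fun x => ind (x = j)) σ.

Definition mean_N {S : Type} (p : R -> S -> S -> R) (t : tree) (i j : S) : R :=
  tsum (fun σ => leaf_law p t i σ * Ncount j σ).

Definition var_N {S : Type} (p : R -> S -> S -> R) (t : tree) (i j : S) : R :=
  tsum (fun σ => leaf_law p t i σ * (Ncount j σ - mean_N p t i j) ^ 2).

(* Main.v *)
Require Import Defs.
From Stdlib Require Import Reals.
From Stdlib Require Import Lra Lia List Classical ClassicalEpsilon ZArith FunctionalExtensionality.
Import ListNotations.
Open Scope R_scope.

Definition dec {A : Type} (x y : A) : {x = y} + {x <> y} :=
  excluded_middle_informative (x = y).

Lemma fsum_nil {A} (f : A -> R) : fsum f [] = 0.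
Proof. reflexivity. Qed.
Lemma fsum_cons {A} (f : A -> R) a l : fsum f (a :: l) = f a + fsum f l.
Proof. reflexivity. Qed.
Lemma fsum_app {A} (f : A -> R) l1 l2 : fsum f (l1 ++ l2) = fsum f l1 + fsum f l2.
Proof. induction l1; simpl; [lra|]. unfold fsum in *; simpl in *. rewrite IHl1; lra. Qed.
Lemma fsum_map {A B} (f : B -> R) (g : A -> B) l : fsum f (map g l) = fsum (fun x => f (g x)) l.
Proof. induction l; simpl; auto. unfold fsum in *; simpl; rewrite IHl; auto. Qed.
Lemma fsum_ext {A} (f g : A -> R) l : (forall x, In x l -> f x = g x) -> fsum f l = fsum g l.
Proof. induction l; simpl; intros H; auto. unfold fsum in *; simpl.
  rewrite H by auto. rewrite IHl; auto. Qed.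
Lemma fsum_le {A} (f g : A -> R) l : (forall x, In x l -> f x <= g x) -> fsum f l <= fsum g l.
Proof. induction l; intros H; [unfold fsum; simpl; lra|].
  rewrite !fsum_cons. assert (f a <= g a) by (apply H; left; auto). assert (fsum f l <= fsum g l) by (apply IHl; intros; apply H; right; auto). lra. Qed.
Lemma fsum_nonneg {A} (f : A -> R) l : (forall x, 0 <= f x) -> 0 <= fsum f l.
Proof. intros H; induction l; [unfold fsum; simpl; lra|]. rewrite fsum_cons. specialize (H a); lra. Qed.
Lemma fsum_plus {A} (f g : A -> R) l : fsum (fun x => f x + g x) l = fsum f l + fsum g l.
Proof. induction l; [unfold fsum; simpl; lra|]. rewrite !fsum_cons, IHl. lra. Qed.
Lemma fsum_scal {A} (f : A -> R) c l : fsum (fun x => c * f x) l = c * fsum f l.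
Proof. induction l; [unfold fsum; simpl; lra|]. rewrite !fsum_cons, IHl. lra. Qed.
Lemma fsum_const {A} c (l : list A) : fsum (fun _ => c) l = INR (length l) * c.
Proof. induction l; [unfold fsum; simpl; lra|]. rewrite fsum_cons, IHl. simpl length.
  rewrite S_INR. lra. Qed.

Lemma fsum_incl {A} (f : A -> R) l l' : (forall x, 0 <= f x) -> NoDup l -> incl l l' ->
  fsum f l <= fsum f l'.
Proof.
  intros Hf Hnd. revert l'. induction Hnd as [|a l Hna Hnd IH]; intros l' Hi.
  - rewrite fsum_nil. apply fsum_nonneg; auto.
  - assert (Ha : In a l') by (apply Hi; left; auto).
    destruct (in_split _ _ Ha) as [l1 [l2 ->]].
    rewrite fsum_cons, fsum_app, fsum_cons.
    assert (fsum f l <= fsum f (l1 ++ l2)).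
    { apply IH. intros x Hx. assert (Hx' : In x (l1 ++ a :: l2)) by (apply Hi; right; auto).
      apply in_app_or in Hx'. apply in_or_app. destruct Hx' as [H|[H|H]]; auto.
      subst; contradiction. }
    rewrite fsum_app in H. lra.
Qed.

Definition sums {A} (f : A -> R) : R -> Prop := fun r => exists l : list A, NoDup l /\ r = fsum f l.

Lemma has_sum_ub {A} (f : A -> R) v l : has_sum f v -> NoDup l -> fsum f l <= v.
Proof. intros [H _] Hl. apply H. exists l; auto. Qed.

Lemma has_sum_approx {A} (f : A -> R) v eps : has_sum f v -> 0 < eps ->
  exists l, NoDup l /\ v - eps < fsum f l.
Proof.
  intros [Hu Hl] He. apply NNPP; intro Hn.
  assert (v <= v - eps); [|lra].
  apply Hl. intros r [l [Hnd ->]]. apply Rnot_lt_le. intro Hlt. apply Hn; eauto.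
Qed.

Lemma has_sum_intro {A} (f : A -> R) v :
  (forall l, NoDup l -> fsum f l <= v) ->
  (forall eps, 0 < eps -> exists l, NoDup l /\ v - eps < fsum f l) -> has_sum f v.
Proof.
  intros H1 H2. split.
  - intros r [l [Hnd ->]]; auto.
  - intros b Hb. apply Rnot_lt_le; intro Hlt.
    destruct (H2 (v - b)) as [l [Hnd Hl]]; [lra|].
    assert (fsum f l <= b) by (apply Hb; exists l; auto). lra.
Qed.

Lemma has_sum_unique {A} (f : A -> R) v w : has_sum f v -> has_sum f w -> v = w.
Proof. intros [H1 H2] [H3 H4]. apply Rle_antisym; auto. Qed.

Lemma has_sum_exists {A} (f : A -> R) B : (forall l, NoDup l -> fsum f l <= B) ->
  exists v, has_sum f v /\ v <= B.
Proof.
  intros H. destruct (completeness (sums f)) as [v Hv].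
  - exists B. intros r [l [Hnd ->]]; auto.
  - exists 0. exists []. split; [constructor|reflexivity].
  - exists v. split; [exact Hv|]. apply Hv. intros r [l [Hnd ->]]; auto.
Qed.

Lemma tsum_eq {A} (f : A -> R) v : has_sum f v -> tsum f = v.
Proof.
  intros H. unfold tsum. destruct (excluded_middle_informative _) as [e|n].
  - destruct (constructive_indefinite_description _ e) as [w Hw]; simpl.
    eapply has_sum_unique; eauto.
  - exfalso; apply n; eauto.
Qed.

Lemma has_sum_nonneg {A} (f : A -> R) v : has_sum f v -> 0 <= v.
Proof. intros H. change 0 with (fsum f []). apply has_sum_ub; auto. constructor. Qed.

Lemma fsum_zero {A} (f : A -> R) l : (forall x, In x l -> f x = 0) -> fsum f l = 0.
Proof. intros H. rewrite (fsum_ext f (fun _ => 0)) by auto. rewrite fsum_const. lra. Qed.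

Lemma has_sum_single {A} (f : A -> R) a : 0 <= f a -> (forall x, x <> a -> f x = 0) -> has_sum f (f a).
Proof.
  intros H0 H. apply has_sum_intro.
  - intros l Hl. induction Hl as [|b l Hb Hl IH].
    + unfold fsum; simpl. lra.
    + rewrite fsum_cons. destruct (dec b a) as [->|Hne].
      * rewrite fsum_zero; [lra|]. intros x Hx. apply H. intros ->; contradiction.
      * rewrite H by auto. lra.
  - intros e He. exists [a]. split. constructor; [simpl; tauto|constructor].
    unfold fsum; simpl. lra.
Qed.

Lemma has_sum_single_le {A} (f : A -> R) v a : has_sum f v -> f a <= v.
Proof. intros H. replace (f a) with (fsum f [a]) by (unfold fsum; simpl; lra).
  apply has_sum_ub; auto. constructor; [simpl; tauto|constructor]. Qed.

Lemma has_sum_le {A} (f g : A -> R) a b : (forall x, f x <= g x) ->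
  has_sum f a -> has_sum g b -> a <= b.
Proof.
  intros Hle Hf Hg. apply Hf. intros r [l [Hnd ->]].
  apply Rle_trans with (fsum g l). apply fsum_le; auto. apply has_sum_ub; auto.
Qed.

Lemma has_sum_ext {A} (f g : A -> R) v : (forall x, f x = g x) -> has_sum f v -> has_sum g v.
Proof.
  intros He H. apply has_sum_intro.
  - intros l Hl. rewrite <- (fsum_ext f g) by auto. apply has_sum_ub; auto.
  - intros e He'. destruct (has_sum_approx f v e H He') as [l [Hl Hv]].
    exists l; split; auto. rewrite <- (fsum_ext f g) by auto. auto.
Qed.

Lemma NoDup_merge {A} (l1 l2 : list A) : exists l, NoDup l /\ incl l1 l /\ incl l2 l.
Proof.
  exists (nodup dec (l1 ++ l2)). split; [apply NoDup_nodup|].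
  split; intros x Hx; apply nodup_In; apply in_or_app; auto.
Qed.

Lemma has_sum_plus {A} (f g : A -> R) a b : (forall x, 0 <= f x) -> (forall x, 0 <= g x) ->
  has_sum f a -> has_sum g b -> has_sum (fun x => f x + g x) (a + b).
Proof.
  intros Hf Hg Ha Hb. apply has_sum_intro.
  - intros l Hl. rewrite fsum_plus. pose proof (has_sum_ub f a l Ha Hl).
    pose proof (has_sum_ub g b l Hb Hl). lra.
  - intros e He. destruct (has_sum_approx f a (e/2) Ha) as [l1 [H1 H1']]; [lra|].
    destruct (has_sum_approx g b (e/2) Hb) as [l2 [H2 H2']]; [lra|].
    destruct (NoDup_merge l1 l2) as [l [Hl [Hi1 Hi2]]]. exists l; split; auto.
    rewrite fsum_plus. pose proof (fsum_incl f l1 l Hf H1 Hi1).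
    pose proof (fsum_incl g l2 l Hg H2 Hi2). lra.
Qed.

Lemma has_sum_scal {A} (f : A -> R) c a : 0 <= c -> has_sum f a -> has_sum (fun x => c * f x) (c * a).
Proof.
  intros Hc Ha. destruct (Req_dec c 0) as [->|Hc0].
  - apply has_sum_intro.
    + intros l _. rewrite fsum_scal. lra.
    + intros e He. exists []. split; [constructor|]. unfold fsum; simpl. lra.
  - apply has_sum_intro.
    + intros l Hl. rewrite fsum_scal. pose proof (has_sum_ub f a l Ha Hl).
      apply Rmult_le_compat_l; lra.
    + intros e He. destruct (has_sum_approx f a (e / c) Ha) as [l [Hl Hl']].
      { apply Rdiv_lt_0_compat; lra. }
      exists l; split; auto. rewrite fsum_scal.
      assert (c * (a - e / c) < c * fsum f l) by (apply Rmult_lt_compat_l; lra).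
      replace (c * (a - e / c)) with (c * a - e) in H by (field; auto). lra.
Qed.

Lemma has_sum_le_exists {A} (f g : A -> R) b : (forall x, 0 <= f x) -> (forall x, f x <= g x) ->
  has_sum g b -> exists a, has_sum f a /\ a <= b.
Proof.
  intros Hf Hle Hg. apply has_sum_exists. intros l Hl.
  apply Rle_trans with (fsum g l). apply fsum_le; auto. apply has_sum_ub; auto.
Qed.

Lemma has_sum_minus {A} (f g h : A -> R) b c : (forall x, 0 <= f x) -> (forall x, 0 <= g x) ->
  (forall x, f x + g x = h x) -> has_sum h c -> has_sum g b -> has_sum f (c - b).
Proof.
  intros Hf Hg Hh Hc Hb.
  assert (Hle : forall x, f x <= h x) by (intros x; rewrite <- Hh; specialize (Hg x); lra).
  destruct (has_sum_le_exists f h c Hf Hle Hc) as [a [Ha _]].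
  assert (H := has_sum_plus f g a b Hf Hg Ha Hb).
  apply (has_sum_ext _ h) in H; auto.
  pose proof (has_sum_unique _ _ _ H Hc). replace (c - b) with a by lra. auto.
Qed.

Lemma has_sum_zero {A} (f : A -> R) : (forall x, f x = 0) -> has_sum f 0.
Proof.
  intros H. apply has_sum_intro.
  - intros l _. rewrite (fsum_ext f (fun _ => 0)) by auto. rewrite fsum_const. lra.
  - intros e He. exists []. split; [constructor|]. unfold fsum; simpl. lra.
Qed.

Lemma NoDup_map_inj {A B} (f : A -> B) l : (forall x y, f x = f y -> x = y) -> NoDup l -> NoDup (map f l).
Proof. intros Hi Hl. apply NoDup_map_NoDup_ForallPairs; auto. intros x y _ _; auto. Qed.

Lemma reindex_lists {A B} (phi : A -> B) (g : B -> R) lb :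
  (forall b, g b <> 0 -> exists a, phi a = b) -> NoDup lb ->
  exists la, NoDup la /\ fsum (fun a => g (phi a)) la = fsum g lb /\ (forall a, In a la -> In (phi a) lb).
Proof.
  intros Hs Hl. induction Hl as [|b lb Hb Hl IH].
  - exists []. split; [constructor|]. split; [reflexivity|]. simpl; tauto.
  - destruct IH as [la [H1 [H2 H3]]].
    destruct (Req_dec (g b) 0) as [Hz|Hnz].
    + exists la. repeat split; auto. rewrite fsum_cons, Hz, H2. lra.
      intros a Ha; right; auto.
    + destruct (Hs b Hnz) as [a Ha]. exists (a :: la). repeat split.
      * constructor; auto. intro Hin. apply H3 in Hin. rewrite Ha in Hin. contradiction.
      * rewrite !fsum_cons, H2, Ha. auto.
      * intros x [<-|Hx]; [left; auto|right; auto].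
Qed.

Lemma has_sum_reindex {A B} (phi : A -> B) (g : B -> R) v :
  (forall x y, phi x = phi y -> x = y) -> (forall b, g b <> 0 -> exists a, phi a = b) ->
  (has_sum (fun a => g (phi a)) v <-> has_sum g v).
Proof.
  intros Hi Hs. split; intro H; apply has_sum_intro.
  - intros lb Hlb. destruct (reindex_lists phi g lb Hs Hlb) as [la [H1 [H2 _]]].
    rewrite <- H2. apply has_sum_ub; auto.
  - intros e He. destruct (has_sum_approx _ _ e H He) as [la [H1 H2]].
    exists (map phi la). split. apply NoDup_map_inj; auto. rewrite fsum_map. auto.
  - intros la Hla. rewrite <- fsum_map. apply has_sum_ub; auto. apply NoDup_map_inj; auto.
  - intros e He. destruct (has_sum_approx _ _ e H He) as [lb [H1 H2]].
    destruct (reindex_lists phi g lb Hs H1) as [la [H3 [H4 _]]]. exists la; split; auto. lra.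
Qed.

Lemma NoDup_list_prod {A B} (la : list A) (lb : list B) : NoDup la -> NoDup lb -> NoDup (list_prod la lb).
Proof.
  intros Ha Hb. induction Ha as [|a la Hna Ha IH]; simpl; [constructor|].
  apply NoDup_app; auto.
  - apply NoDup_map_inj; auto. intros x y H; inversion H; auto.
  - intros [x y] Hin Hin2. apply in_map_iff in Hin. destruct Hin as [z [Hz _]]. inversion Hz; subst.
    apply in_prod_iff in Hin2. tauto.
Qed.

Lemma fsum_list_prod {A B} (F : A -> B -> R) la lb :
  fsum (fun x => F (fst x) (snd x)) (list_prod la lb) = fsum (fun a => fsum (F a) lb) la.
Proof.
  induction la; [reflexivity|]. cbn [list_prod]. rewrite fsum_app, fsum_map, fsum_cons, IHla. reflexivity.
Qed.

Lemma common_approx {A B} (F : A -> B -> R) G : (forall a b, 0 <= F a b) ->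
  (forall a, has_sum (F a) (G a)) -> forall la d, 0 < d ->
  exists lb, NoDup lb /\ fsum G la - d < fsum (fun a => fsum (F a) lb) la.
Proof.
  intros Hn HG la. induction la as [|a la IH]; intros d Hd.
  - exists []. split; [constructor|]. unfold fsum; simpl; lra.
  - destruct (IH (d/2)) as [lb1 [H1 H1']]; [lra|].
    destruct (has_sum_approx _ _ (d/2) (HG a)) as [lb2 [H2 H2']]; [lra|].
    destruct (NoDup_merge lb1 lb2) as [lb [Hl [I1 I2]]]. exists lb; split; auto.
    rewrite !fsum_cons.
    assert (fsum (F a) lb2 <= fsum (F a) lb) by (apply fsum_incl; auto).
    assert (fsum (fun a0 => fsum (F a0) lb1) la <= fsum (fun a0 => fsum (F a0) lb) la).
    { apply fsum_le. intros x _. apply fsum_incl; auto. }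
    lra.
Qed.

Lemma pair_of_iter {A B} (F : A -> B -> R) G v : (forall a b, 0 <= F a b) ->
  (forall a, has_sum (F a) (G a)) -> has_sum G v -> has_sum (fun x => F (fst x) (snd x)) v.
Proof.
  intros Hn HG Hv. apply has_sum_intro.
  - intros L HL. set (la := nodup dec (map fst L)). set (lb := nodup dec (map snd L)).
    apply Rle_trans with (fsum (fun x => F (fst x) (snd x)) (list_prod la lb)).
    { apply fsum_incl; auto. intros [x y] Hin. apply in_prod_iff. split.
      - apply nodup_In. apply in_map_iff. exists (x, y); auto.
      - apply nodup_In. apply in_map_iff. exists (x, y); auto. }
    rewrite fsum_list_prod. apply Rle_trans with (fsum G la).
    + apply fsum_le. intros a _. apply has_sum_ub; auto. apply NoDup_nodup.
    + apply has_sum_ub; auto. apply NoDup_nodup.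
  - intros e He. destruct (has_sum_approx _ _ (e/2) Hv) as [la [H1 H1']]; [lra|].
    destruct (common_approx F G Hn HG la (e/2)) as [lb [H2 H2']]; [lra|].
    exists (list_prod la lb). split. apply NoDup_list_prod; auto.
    rewrite fsum_list_prod. lra.
Qed.

Lemma iter_of_pair {A B} (F : A -> B -> R) v : (forall a b, 0 <= F a b) ->
  has_sum (fun x => F (fst x) (snd x)) v ->
  exists G, (forall a, has_sum (F a) (G a)) /\ has_sum G v.
Proof.
  intros Hn Hv.
  assert (HG : forall a, has_sum (F a) (tsum (F a))).
  { intros a. destruct (has_sum_exists (F a) v) as [w [Hw _]].
    - intros l Hl. replace (fsum (F a) l) with (fsum (fun x => F (fst x) (snd x)) (map (pair a) l)).
      apply has_sum_ub; auto. apply NoDup_map_inj; auto. intros x y H; inversion H; auto.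
      rewrite fsum_map. reflexivity.
    - rewrite (tsum_eq _ w); auto. }
  destruct (has_sum_exists (fun a => tsum (F a)) v) as [w [Hw _]].
  { intros la Hla. apply Rnot_lt_le; intro Hlt.
    destruct (common_approx F _ Hn HG la (fsum (fun a => tsum (F a)) la - v)) as [lb [H1 H2]]; [lra|].
    rewrite <- fsum_list_prod in H2.
    assert (fsum (fun x => F (fst x) (snd x)) (list_prod la lb) <= v).
    apply has_sum_ub; auto. apply NoDup_list_prod; auto. lra. }
  exists (fun a => tsum (F a)). split; auto.
  pose proof (pair_of_iter F _ w Hn HG Hw). rewrite (has_sum_unique _ _ _ H Hv) in Hw. auto.
Qed.

Lemma tonelli {A B} (F : A -> B -> R) G v : (forall a b, 0 <= F a b) ->
  (forall a, has_sum (F a) (G a)) -> has_sum G v ->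
  exists H, (forall b, has_sum (fun a => F a b) (H b)) /\ has_sum H v.
Proof.
  intros Hn HG Hv. pose proof (pair_of_iter F G v Hn HG Hv) as HP.
  set (F' := fun b a => F a b).
  assert (HP' : has_sum (fun x => F' (fst x) (snd x)) v).
  { apply (has_sum_reindex (fun x : B * A => (snd x, fst x)) (fun x => F (fst x) (snd x))).
    - intros [x1 x2] [y1 y2] H; simpl in H; inversion H; auto.
    - intros [a b] _. exists (b, a). reflexivity.
    - exact HP. }
  apply iter_of_pair in HP'; [|unfold F'; auto]. exact HP'.
Qed.

Lemma nat_above (r : R) : exists n : nat, r < INR n.
Proof.
  destruct (archimed (Rabs r)) as [H1 _].
  exists (Z.to_nat (up (Rabs r))). rewrite INR_IZR_INZ.
  assert (0 < IZR (up (Rabs r))) by (pose proof (Rabs_pos r); lra).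
  apply lt_0_IZR in H. rewrite Z2Nat.id by lia.
  pose proof (Rle_abs r). lra.
Qed.

Lemma bernoulli (x : R) n : 0 <= x <= 1 -> 1 - INR n * x <= (1 - x) ^ n.
Proof.
  intros Hx. induction n.
  - simpl. lra.
  - rewrite S_INR. simpl pow.
    assert ((1 - x) * (1 - INR n * x) <= (1 - x) * (1 - x) ^ n) by (apply Rmult_le_compat_l; lra).
    pose proof (pos_INR n). nra.
Qed.

Section Q.
Context {S : Type} (p : R -> S -> S -> R) (Hp : transition_function p).

Lemma ind_true (P : Prop) : P -> Defs.ind P = 1.
Proof. intros H. unfold Defs.ind. destruct (excluded_middle_informative P); tauto. Qed.
Lemma ind_false (P : Prop) : ~ P -> Defs.ind P = 0.
Proof. intros H. unfold Defs.ind. destruct (excluded_middle_informative P); tauto. Qed.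

Lemma p_nonneg t a b : 0 <= t -> 0 <= p t a b.
Proof. apply (tf_nonneg _ Hp). Qed.
Lemma p_le1 t a b : 0 <= t -> p t a b <= 1.
Proof. intros Ht. apply has_sum_single_le. apply (tf_stoch _ Hp); auto. Qed.
Lemma p0kk k : p 0 k k = 1.
Proof. rewrite (tf_init _ Hp). apply ind_true; auto. Qed.

Lemma pkk_mult s t k : 0 <= s -> 0 <= t -> p s k k * p t k k <= p (s + t) k k.
Proof.
  intros Hs Ht. pose proof (tf_CK _ Hp s t k k Hs Ht) as H.
  apply (has_sum_single_le _ _ k) in H. exact H.
Qed.

Lemma pkk_pow h k n : 0 <= h -> (p h k k) ^ n <= p (INR n * h) k k.
Proof.
  intros Hh. induction n.
  - simpl. rewrite Rmult_0_l, p0kk. lra.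
  - rewrite S_INR. replace ((INR n + 1) * h) with (INR n * h + h) by ring. simpl pow.
    pose proof (pos_INR n).
    apply Rle_trans with (p (INR n * h) k k * p h k k).
    + rewrite Rmult_comm. apply Rmult_le_compat_r; auto. apply p_nonneg; auto.
    + apply pkk_mult; auto. apply Rmult_le_pos; auto.
Qed.

Lemma one_minus_pkk (Q : S -> S -> R) (HQ : qmatrix_of p Q) k l : 0 < l ->
  1 - p l k k <= - Q k k * l.
Proof.
  intros Hl.
  assert (Key : forall e, 0 < e -> 1 - p l k k <= (- Q k k + e) * l).
  { intros e He. destruct HQ as [HQ1 _]. destruct (HQ1 k k e He) as [d [Hd Hh]].
    rewrite p0kk in Hh.
    destruct (nat_above (Rmax (l / d) ((- Q k k + e) * l))) as [n Hn].
    assert (Hn1 : l / d < INR n) by (pose proof (Rmax_l (l/d) ((- Q k k + e) * l)); lra).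
    assert (Hn2 : (- Q k k + e) * l < INR n) by (pose proof (Rmax_r (l/d) ((- Q k k + e) * l)); lra).
    assert (Hnpos : 0 < INR n) by (assert (0 < l / d) by (apply Rdiv_lt_0_compat; lra); lra).
    set (h := l / INR n).
    assert (Hh0 : 0 < h) by (apply Rdiv_lt_0_compat; lra).
    assert (Hhd : h < d).
    { unfold h. apply Rmult_lt_reg_r with (INR n); auto. unfold Rdiv. rewrite Rmult_assoc, Rinv_l by lra.
      apply Rmult_lt_reg_r with (/ d). apply Rinv_0_lt_compat; lra.
      rewrite Rmult_1_r. rewrite (Rmult_comm d), Rmult_assoc, Rinv_r by lra. lra. }
    specialize (Hh h (conj Hh0 Hhd)).
    apply Rabs_def2 in Hh. destruct Hh as [_ Hh].
    set (x := (- Q k k + e) * h).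
    assert (Hph : 1 - x < p h k k).
    { unfold x. assert (Q k k - e < (p h k k - 1) / h) by lra.
      apply Rmult_lt_compat_r with (r := h) in H; auto.
      unfold Rdiv in H. rewrite Rmult_assoc, Rinv_l in H by lra. lra. }
    assert (Hp1 : p h k k <= 1) by (apply p_le1; lra).
    assert (Hx0 : 0 <= x) by lra.
    assert (Hxl : INR n * x = (- Q k k + e) * l).
    { unfold x, h. field. lra. }
    assert (Hx1 : x <= 1).
    { apply Rmult_le_reg_l with (INR n); auto. rewrite Hxl. lra. }
    assert (Hl' : l = INR n * h) by (unfold h; field; lra).
    pose proof (bernoulli x n (conj Hx0 Hx1)).
    pose proof (pow_incr (1 - x) (p h k k) n ltac:(lra)).
    pose proof (pkk_pow h k n ltac:(lra)). rewrite <- Hl' in H1. lra. }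
  apply Rnot_lt_le. intro Hlt.
  set (e := (1 - p l k k - - Q k k * l) / (2 * l)).
  assert (He : 0 < e) by (unfold e; apply Rdiv_lt_0_compat; lra).
  specialize (Key e He). unfold e in Key.
  replace ((- Q k k + (1 - p l k k - - Q k k * l) / (2 * l)) * l) with
    (- Q k k * l + (1 - p l k k - - Q k k * l) / 2) in Key by (field; lra). lra.
Qed.

Lemma eps_bound (Q : S -> S -> R) (HQ : qmatrix_of p Q) k l : 0 < l ->
  0 <= 1 - p l k k <= Rmax (- Q k k) 1 * Rmin l 1.
Proof.
  intros Hl. pose proof (one_minus_pkk Q HQ k l Hl). pose proof (p_le1 l k k ltac:(lra)).
  pose proof (p_nonneg l k k ltac:(lra)).
  pose proof (Rmax_l (- Q k k) 1). pose proof (Rmax_r (- Q k k) 1).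
  split; [lra|]. destruct (Rle_dec l 1).
  - rewrite Rmin_left by auto. apply Rle_trans with (- Q k k * l); auto.
    apply Rmult_le_compat_r; lra.
  - rewrite Rmin_right by lra. lra.
Qed.
End Q.

Fixpoint golaw {S : Type} (p : R -> S -> S -> R) (k : S) (cs : list (R * tree)) (σ : list S) : R :=
  match cs with
  | [] => match σ with [] => 1 | _ => 0 end
  | (l, c) :: r => tsum (fun s => p l k s * leaf_law p c s (firstn (nleaves c) σ))
                   * golaw p k r (skipn (nleaves c) σ)
  end.

Lemma leaf_law_node {S : Type} (p : R -> S -> S -> R) k x r σ :
  leaf_law p (Node (x :: r)) k σ = golaw p k (x :: r) σ.
Proof.
  destruct x as [l c]. cbn [leaf_law golaw]. f_equal. generalize (skipn (nleaves c) σ).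
  induction r as [|[l0 c0] r0 IH]; intros σ'; [reflexivity|]. cbn [golaw]. rewrite <- IH. reflexivity.
Qed.

Lemma leaf_law_leaf {S : Type} (p : R -> S -> S -> R) k σ :
  leaf_law p (Node []) k σ = match σ with [x] => Defs.ind (x = k) | _ => 0 end.
Proof. reflexivity. Qed.

Fixpoint nl (cs : list (R * tree)) : nat :=
  match cs with [] => 0%nat | (_, c) :: r => (nleaves c + nl r)%nat end.

Lemma nleaves_node x r : nleaves (Node (x :: r)) = nl (x :: r).
Proof.
  destruct x as [l c]. cbn [nleaves nl]. f_equal.
  all: induction r as [|[l0 c0] r0 IH]; [reflexivity|]; cbn [nl]; rewrite <- IH; reflexivity.
Qed.

Fixpoint lgo (n : nat) (cs : list (R * tree)) : list (list (nat * R)) :=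
  match cs with
  | [] => []
  | (l, c) :: r => map (cons (n, l)) (leaves c) ++ lgo (Datatypes.S n) r
  end.

Lemma leaves_node x r : leaves (Node (x :: r)) = lgo 0 (x :: r).
Proof.
  destruct x as [l c]. cbn [leaves lgo]. f_equal.
  all: generalize 1%nat; induction r as [|[l0 c0] r0 IH]; intros n; [reflexivity|]; cbn [lgo]; rewrite <- IH; reflexivity.
Qed.

Lemma pos_lengths_cons l c r : pos_lengths (Node ((l, c) :: r)) <->
  0 < l /\ pos_lengths c /\ pos_lengths (Node r).
Proof. reflexivity. Qed.

Fixpoint tree_ind2 (P : tree -> Prop)
  (H : forall cs, Forall (fun lc => P (snd lc)) cs -> P (Node cs)) (t : tree) : P t :=
  match t with
  | Node cs => H cs ((fix go (cs : list (R * tree)) : Forall (fun lc => P (snd lc)) cs :=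
                       match cs with
                       | [] => Forall_nil _
                       | x :: r => Forall_cons x (tree_ind2 P H (snd x)) (go r)
                       end) cs)
  end.

Lemma length_lgo n cs : Forall (fun lc => length (leaves (snd lc)) = nleaves (snd lc)) cs ->
  length (lgo n cs) = nl cs.
Proof.
  revert n; induction cs as [|[l c] r IH]; intros n H; [reflexivity|].
  inversion H; subst. cbn [lgo nl]. rewrite length_app, length_map, IH; auto.
Qed.

Lemma length_leaves t : length (leaves t) = nleaves t.
Proof.
  induction t as [cs IH] using tree_ind2. destruct cs as [|x r]; [reflexivity|].
  rewrite leaves_node, nleaves_node. apply length_lgo; auto.
Qed.

Definition nnpath (x : list (nat * R)) := forall q, In q x -> 0 <= snd q.

Lemma lgo_nn n cs : Forall (fun lc => pos_lengths (snd lc) -> forall x, In x (leaves (snd lc)) -> nnpath x) cs ->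
  pos_lengths (Node cs) -> forall x, In x (lgo n cs) -> nnpath x.
Proof.
  revert n; induction cs as [|[l c] r IH]; intros n H Hp x Hx; [destruct Hx|].
  inversion H; subst. apply pos_lengths_cons in Hp. destruct Hp as [Hl [Hc Hr]].
  cbn [lgo] in Hx. apply in_app_or in Hx. destruct Hx as [Hx|Hx].
  - apply in_map_iff in Hx. destruct Hx as [y [<- Hy]]. intros e [<-|He]; simpl; [lra|].
    eapply H2; eauto.
  - eapply IH; eauto.
Qed.

Lemma leaves_nn t : pos_lengths t -> forall x, In x (leaves t) -> nnpath x.
Proof.
  induction t as [cs IH] using tree_ind2. intros Hp x Hx. destruct cs as [|y r].
  - simpl in Hx. destruct Hx as [<-|[]]. intros e [].
  - rewrite leaves_node in Hx. eapply lgo_nn; eauto.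
Qed.

Lemma cl_nonneg x y : nnpath x -> 0 <= common_length x y.
Proof.
  revert y; induction x as [|[n l] x IH]; intros y Hx; [simpl; lra|].
  destruct y as [|[m l'] y]; simpl; [lra|]. destruct (Nat.eq_dec n m); [|lra].
  assert (0 <= l) by (apply (Hx (n, l)); left; auto).
  assert (0 <= common_length x y) by (apply IH; intros q Hq; apply Hx; right; auto). lra.
Qed.

Lemma lgo_head n cs x : In x (lgo n cs) -> exists m l rest, x = (m, l) :: rest /\ (n <= m)%nat.
Proof.
  revert n; induction cs as [|[l c] r IH]; intros n Hx; [destruct Hx|].
  cbn [lgo] in Hx. apply in_app_or in Hx. destruct Hx as [Hx|Hx].
  - apply in_map_iff in Hx. destruct Hx as [y [<- _]]. exists n, l, y. split; auto.
  - destruct (IH _ Hx) as [m [l' [rest [-> Hm]]]]. exists m, l', rest. split; auto. lia.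
Qed.

Fixpoint PairSum {T} (h : T -> T -> R) (L : list T) : R :=
  match L with [] => 0 | x :: L' => fsum (fun y => h x y + h y x) L' + PairSum h L' end.

Lemma PS_app {T} (h : T -> T -> R) A B : PairSum h (A ++ B) =
  PairSum h A + PairSum h B + fsum (fun x => fsum (fun y => h x y + h y x) B) A.
Proof.
  induction A as [|a A IH]; cbn [PairSum app]. rewrite fsum_nil. lra.
  rewrite IH, fsum_app, fsum_cons. lra.
Qed.

Lemma PS_map {T U} (h : U -> U -> R) (f : T -> U) L :
  PairSum h (map f L) = PairSum (fun x y => h (f x) (f y)) L.
Proof. induction L; cbn [PairSum map]; auto. rewrite IHL, fsum_map. reflexivity. Qed.

Lemma PS_ext {T} (h g : T -> T -> R) L : (forall x y, h x y = g x y) -> PairSum h L = PairSum g L.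
Proof. intros H. induction L; cbn [PairSum]; auto. rewrite IHL. f_equal. apply fsum_ext. intros; rewrite !H; auto. Qed.

Lemma PS_lin {T} (h g : T -> T -> R) c L :
  PairSum (fun x y => h x y - c * g x y) L = PairSum h L - c * PairSum g L.
Proof.
  induction L; cbn [PairSum]; [lra|]. rewrite IHL.
  rewrite (fsum_ext _ (fun y => (h a y + h y a) + (-c) * (g a y + g y a))) by (intros; ring).
  rewrite fsum_plus, fsum_scal. lra.
Qed.

Lemma PS_ge {T} (h : T -> T -> R) e L : (forall x y, In x L -> In y L -> e <= h x y) ->
  e * (INR (length L) * (INR (length L) - 1)) <= PairSum h L.
Proof.
  induction L as [|a L IH]; intros H; cbn [PairSum length]. simpl; lra.
  assert (Hs : fsum (fun _ => e + e) L <= fsum (fun y => h a y + h y a) L).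
  { apply fsum_le. intros y Hy. assert (e <= h a y) by (apply H; simpl; auto).
    assert (e <= h y a) by (apply H; simpl; auto). lra. }
  rewrite fsum_const in Hs.
  assert (e * (INR (length L) * (INR (length L) - 1)) <= PairSum h L)
    by (apply IH; intros; apply H; simpl; auto).
  rewrite S_INR. nra.
Qed.

Lemma fsum_seq_nth {T} (f : T -> R) L d :
  fsum (fun y => f (nth y L d)) (seq 0 (length L)) = fsum f L.
Proof.
  induction L as [|a L IH]; [reflexivity|]. simpl length.
  cbn [seq]. rewrite <- seq_shift. rewrite fsum_cons, fsum_map, fsum_cons. simpl nth. rewrite IH. reflexivity.
Qed.

Lemma PS_index {T} (h : T -> T -> R) L d :
  fsum (fun x => fsum (fun y => if Nat.eq_dec x y then 0 else h (nth x L d) (nth y L d))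
     (seq 0 (length L))) (seq 0 (length L)) = PairSum h L.
Proof.
  induction L as [|a L IH]; [reflexivity|]. simpl length.
  cbn [seq]. rewrite <- seq_shift. rewrite fsum_cons, fsum_map. rewrite fsum_cons, fsum_map. simpl nth.
  rewrite (fsum_ext (fun x => if Nat.eq_dec 0 (S x) then 0 else h a (nth x L d))
     (fun x => h a (nth x L d))) by (intros; destruct (Nat.eq_dec 0 (S x)); [lia|auto]).
  rewrite fsum_seq_nth.
  rewrite (fsum_ext (fun x => fsum (fun y => if Nat.eq_dec (S x) y then 0
        else h (nth (S x) (a :: L) d) (nth y (a :: L) d)) (0%nat :: map S (seq 0 (length L))))
     (fun x => h (nth x L d) a + fsum (fun y => if Nat.eq_dec x y then 0 else h (nth x L d) (nth y L d))
        (seq 0 (length L)))).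
  2:{ intros x _. rewrite fsum_cons, fsum_map. simpl nth.
      destruct (Nat.eq_dec (S x) 0); [lia|]. f_equal. apply fsum_ext. intros y _.
      destruct (Nat.eq_dec (S x) (S y)); destruct (Nat.eq_dec x y); auto; lia. }
  rewrite fsum_plus, IH. rewrite (fsum_seq_nth (fun z => h z a)).
  destruct (Nat.eq_dec 0 0); [|lia]. simpl PairSum. rewrite fsum_plus. lra.
Qed.

Definition Dsum (t : tree) (a : R) : R :=
  PairSum (fun x y => Rmin (a + common_length x y) 1) (leaves t).

Fixpoint sumD (cs : list (R * tree)) : R :=
  match cs with [] => 0 | (l, c) :: r => Dsum c l + sumD r end.

Lemma lgo_D n cs : PairSum (fun x y => Rmin (0 + common_length x y) 1) (lgo n cs) = sumD cs.
Proof.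
  revert n; induction cs as [|[l c] r IH]; intros n; [reflexivity|].
  cbn [lgo sumD]. rewrite PS_app, IH, PS_map.
  rewrite (fsum_zero (fun x => fsum _ _)).
  2:{ intros x Hx. apply fsum_zero. intros y Hy. apply in_map_iff in Hx.
      destruct Hx as [x' [<- _]]. destruct (lgo_head _ _ _ Hy) as [m [l' [rest [-> Hm]]]].
      simpl. destruct (Nat.eq_dec n m); [lia|]. destruct (Nat.eq_dec m n); [lia|].
      rewrite Rplus_0_l, Rmin_left by lra. lra. }
  unfold Dsum. rewrite Rplus_0_r. f_equal. apply PS_ext. intros x y. simpl.
  destruct (Nat.eq_dec n n); [|lia]. rewrite Rplus_0_l. reflexivity.
Qed.

Lemma Dsum_node x r : Dsum (Node (x :: r)) 0 = sumD (x :: r).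
Proof. unfold Dsum. rewrite leaves_node. apply lgo_D. Qed.

Lemma spread_eq t : spread t = Dsum t 0 / (INR (nleaves t) * (INR (nleaves t) - 1)).
Proof.
  unfold spread, Dsum. rewrite length_leaves. rewrite <- length_leaves. f_equal.
  rewrite (PS_index (fun x y => Rmin (common_length x y) 1) (leaves t) []).
  apply PS_ext. intros; rewrite Rplus_0_l; auto.
Qed.

Section Prob.
Context {S : Type} (j : S).

Definition N (σ : list S) := Ncount j σ.
Definition good (w : list S -> R) (n : nat) :=
  (forall σ, 0 <= w σ) /\ (forall σ, w σ <> 0 -> length σ = n) /\ has_sum w 1.
Definition Mean (w : list S -> R) := tsum (fun σ => w σ * Ncount j σ).
Definition Var (w : list S -> R) := tsum (fun σ => w σ * (Ncount j σ - Mean w) ^ 2).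

Lemma ind01 (P : Prop) : 0 <= Defs.ind P <= 1.
Proof. unfold Defs.ind. destruct (excluded_middle_informative P); lra. Qed.

Lemma N_app a b : Ncount j (a ++ b) = Ncount j a + Ncount j b.
Proof. unfold Ncount. apply fsum_app. Qed.

Lemma N_bounds σ : 0 <= Ncount j σ <= INR (length σ).
Proof.
  unfold Ncount. split.
  - apply fsum_nonneg. intros; apply ind01.
  - rewrite <- (Rmult_1_r (INR _)), <- fsum_const. apply fsum_le. intros; apply ind01.
Qed.

Lemma E_bound w n f C : good w n -> 0 <= C -> (forall σ, 0 <= f σ) ->
  (forall σ, length σ = n -> f σ <= C) ->
  exists v, has_sum (fun σ => w σ * f σ) v /\ 0 <= v <= C.
Proof.
  intros [Hw [Hs H1]] HC Hf Hb.
  destruct (has_sum_le_exists (fun σ => w σ * f σ) (fun σ => C * w σ) (C * 1)) as [v [Hv Hv']].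
  - intros; apply Rmult_le_pos; auto.
  - intros σ. destruct (Req_dec (w σ) 0) as [->|Hne]; [lra|].
    rewrite Rmult_comm. apply Rmult_le_compat_r; auto.
  - apply has_sum_scal; auto.
  - exists v. split; auto. split; [eapply has_sum_nonneg; eauto|lra].
Qed.

Lemma mean_has w n : good w n -> has_sum (fun σ => w σ * Ncount j σ) (Mean w) /\ 0 <= Mean w <= INR n.
Proof.
  intros Hg. destruct (E_bound w n (Ncount j) (INR n) Hg (pos_INR n)) as [v [Hv Hv']].
  - intros; apply N_bounds.
  - intros σ <-. apply N_bounds.
  - unfold Mean. rewrite (tsum_eq _ v Hv). auto.
Qed.

Lemma moment2 w n a : good w n -> 0 <= a ->
  exists E2, has_sum (fun σ => w σ * Ncount j σ ^ 2) E2 /\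
    has_sum (fun σ => w σ * (Ncount j σ - a) ^ 2) (E2 - 2 * a * Mean w + a ^ 2).
Proof.
  intros Hg Ha. pose proof Hg as [Hw [Hs H1]].
  destruct (E_bound w n (fun σ => Ncount j σ ^ 2) (INR n ^ 2) Hg) as [E2 [HE2 _]].
  - apply pow_le, pos_INR.
  - intros; apply pow_le, N_bounds.
  - intros σ <-. apply pow_incr. apply N_bounds.
  - exists E2. split; auto. destruct (mean_has w n Hg) as [Hm _].
    replace (E2 - 2 * a * Mean w + a ^ 2) with ((E2 + a ^ 2) - 2 * a * Mean w) by ring.
    apply (has_sum_minus _ (fun σ => 2 * a * (w σ * Ncount j σ))
       (fun σ => w σ * Ncount j σ ^ 2 + a ^ 2 * w σ)).
    + intros; apply Rmult_le_pos; auto. apply pow2_ge_0.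
    + intros. apply Rmult_le_pos; [lra|]. apply Rmult_le_pos; auto. apply N_bounds.
    + intros; ring.
    + replace (E2 + a ^ 2) with (E2 + a ^ 2 * 1) by ring. apply has_sum_plus.
      * intros; apply Rmult_le_pos; auto. apply pow2_ge_0.
      * intros; apply Rmult_le_pos; auto. apply pow2_ge_0.
      * auto.
      * apply has_sum_scal; auto. apply pow2_ge_0.
    + apply has_sum_scal; auto. lra.
Qed.

Lemma var_has w n : good w n -> has_sum (fun σ => w σ * (Ncount j σ - Mean w) ^ 2) (Var w) /\ 0 <= Var w.
Proof.
  intros Hg. destruct (mean_has w n Hg) as [_ Hm].
  destruct (moment2 w n (Mean w) Hg ltac:(lra)) as [E2 [_ H]].
  unfold Var at 1 2. rewrite (tsum_eq _ _ H). split; auto. eapply has_sum_nonneg; eauto.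
Qed.

Lemma var_le w n a v : good w n -> 0 <= a ->
  has_sum (fun σ => w σ * (Ncount j σ - a) ^ 2) v -> Var w <= v.
Proof.
  intros Hg Ha Hv. destruct (mean_has w n Hg) as [_ Hm].
  destruct (moment2 w n a Hg Ha) as [E2 [HE2 H]].
  destruct (moment2 w n (Mean w) Hg ltac:(lra)) as [E2' [HE2' H']].
  rewrite (has_sum_unique _ _ _ HE2' HE2) in H'.
  rewrite (has_sum_unique _ _ _ Hv H).
  unfold Var. rewrite (tsum_eq _ _ H'). pose proof (pow2_ge_0 (Mean w - a)). nra.
Qed.

Lemma prod_reindex n1 (F : list S -> list S -> R) v :
  (forall t1 t2, F t1 t2 <> 0 -> length t1 = n1) ->
  has_sum (fun x => F (fst x) (snd x)) v -> has_sum (fun σ => F (firstn n1 σ) (skipn n1 σ)) v.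
Proof.
  intros Hs H. apply (has_sum_reindex (fun σ => (firstn n1 σ, skipn n1 σ)) (fun x => F (fst x) (snd x))).
  - intros x y Hxy. inversion Hxy. rewrite <- (firstn_skipn n1 x), <- (firstn_skipn n1 y).
    congruence.
  - intros [t1 t2] Hne. simpl in Hne. apply Hs in Hne. exists (t1 ++ t2). subst n1.
    rewrite firstn_app, skipn_app, firstn_all, skipn_all, Nat.sub_diag. simpl.
    rewrite app_nil_r. reflexivity.
  - exact H.
Qed.

Lemma prod_sum (w1 w2 h1 h2 : list S -> R) a b :
  (forall σ, 0 <= w1 σ * h1 σ) -> (forall σ, 0 <= w2 σ * h2 σ) ->
  has_sum (fun σ => w1 σ * h1 σ) a -> has_sum (fun σ => w2 σ * h2 σ) b ->
  has_sum (fun x => (w1 (fst x) * h1 (fst x)) * (w2 (snd x) * h2 (snd x))) (a * b).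
Proof.
  intros H1 H2 Ha Hb.
  apply (pair_of_iter (fun t1 t2 => (w1 t1 * h1 t1) * (w2 t2 * h2 t2)) (fun t1 => (w1 t1 * h1 t1) * b)).
  - intros; apply Rmult_le_pos; auto.
  - intros t1. apply has_sum_scal; auto.
  - rewrite Rmult_comm. apply (has_sum_ext (fun t1 => b * (w1 t1 * h1 t1))). intros; ring.
    apply has_sum_scal; auto. eapply has_sum_nonneg; eauto.
Qed.

End Prob.

Section Prod.
Context {St : Type} (j : St).
Context (w1 w2 : list St -> R) (n1 n2 : nat) (G1 : good w1 n1) (G2 : good w2 n2).

Let W (x : list St * list St) := w1 (fst x) * w2 (snd x).
Let w σ := w1 (firstn n1 σ) * w2 (skipn n1 σ).

Lemma w1nn σ : 0 <= w1 σ. Proof. apply G1. Qed.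
Lemma w2nn σ : 0 <= w2 σ. Proof. apply G2. Qed.

Lemma pair_term (h1 h2 : list St -> R) a b : (forall σ, 0 <= h1 σ) -> (forall σ, 0 <= h2 σ) ->
  has_sum (fun σ => w1 σ * h1 σ) a -> has_sum (fun σ => w2 σ * h2 σ) b ->
  has_sum (fun x => W x * (h1 (fst x) * h2 (snd x))) (a * b).
Proof.
  intros H1 H2 Ha Hb. eapply has_sum_ext; [|apply (prod_sum w1 w2 h1 h2); eauto].
  - intros; unfold W; ring.
  - intros; apply Rmult_le_pos; auto using w1nn.
  - intros; apply Rmult_le_pos; auto using w2nn.
Qed.

Lemma transfer (K : list St -> R) v :
  has_sum (fun x => W x * K (fst x ++ snd x)) v -> has_sum (fun σ => w σ * K σ) v.
Proof.
  intros H. eapply has_sum_ext; [|apply (prod_reindex n1 (fun t1 t2 => W (t1, t2) * K (t1 ++ t2)))].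
  - intros σ. simpl. rewrite firstn_skipn. reflexivity.
  - intros t1 t2 Hne. apply G1. unfold W in Hne; simpl in Hne. intro Hz; apply Hne; rewrite Hz; ring.
  - eapply has_sum_ext; [|exact H]. intros [x y]; reflexivity.
Qed.

Lemma has1 : has_sum (fun σ => w1 σ * 1) 1.
Proof. eapply has_sum_ext; [|apply G1]. intros; ring. Qed.
Lemma has2 : has_sum (fun σ => w2 σ * 1) 1.
Proof. eapply has_sum_ext; [|apply G2]. intros; ring. Qed.

Lemma prod_good : good w (n1 + n2).
Proof.
  split; [|split].
  - intros; unfold w; apply Rmult_le_pos; auto using w1nn, w2nn.
  - intros σ Hne. unfold w in Hne.
    assert (E1 : length (firstn n1 σ) = n1) by (apply G1; intro Hz; apply Hne; rewrite Hz; ring).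
    assert (E2 : length (skipn n1 σ) = n2) by (apply G2; intro Hz; apply Hne; rewrite Hz; ring).
    rewrite <- (firstn_skipn n1 σ), length_app. lia.
  - assert (H : has_sum (fun x => W x * ((fun _ => 1) (fst x) * (fun _ => 1) (snd x))) (1 * 1)).
    { apply (pair_term (fun _ => 1) (fun _ => 1) 1 1); auto using has1, has2; intros; lra. }
    assert (H' : has_sum (fun σ => w σ * 1) 1).
    { apply transfer. rewrite Rmult_1_r in H. eapply has_sum_ext; [|exact H]. intros; simpl; ring. }
    eapply has_sum_ext; [|exact H']. intros; apply Rmult_1_r.
Qed.

Lemma hs_eqv {T} (f : T -> R) v v' : has_sum f v -> v = v' -> has_sum f v'.
Proof. intros H <-; auto. Qed.

Lemma hs_plus {T} (f g h : T -> R) a b c : (forall x, 0 <= f x) -> (forall x, 0 <= g x) ->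
  has_sum f a -> has_sum g b -> (forall x, f x + g x = h x) -> a + b = c -> has_sum h c.
Proof. intros Hf Hg Ha Hb Hh <-. eapply has_sum_ext; [exact Hh|]. apply has_sum_plus; auto. Qed.

Lemma Wnn x : 0 <= W x.
Proof. unfold W; apply Rmult_le_pos; auto using w1nn, w2nn. Qed.

Lemma Nnn (σ : list St) : 0 <= Ncount j σ.
Proof. apply N_bounds. Qed.

Lemma prod_mean : Mean j w = Mean j w1 + Mean j w2.
Proof.
  destruct (mean_has j w1 n1 G1) as [M1 [m1p _]]. destruct (mean_has j w2 n2 G2) as [M2 [m2p _]].
  pose proof (pair_term (Ncount j) (fun _ => 1) _ _ Nnn ltac:(intros; lra) M1 has2) as A1.
  pose proof (pair_term (fun _ => 1) (Ncount j) _ _ ltac:(intros; lra) Nnn has1 M2) as A2.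
  unfold Mean at 1. apply tsum_eq. apply transfer.
  eapply (hs_plus _ _ _ _ _ _ _ _ A1 A2).
  - intros x; simpl. rewrite N_app. ring.
  - ring.
  Unshelve. all: intros x; simpl; apply Rmult_le_pos; auto using Wnn; rewrite ?Rmult_1_r, ?Rmult_1_l; apply Nnn.
Qed.

Lemma prod_var : Var j w = Var j w1 + Var j w2.
Proof.
  destruct (mean_has j w1 n1 G1) as [M1 [m1p _]]. destruct (mean_has j w2 n2 G2) as [M2 [m2p _]].
  destruct (var_has j w1 n1 G1) as [V1 V1p]. destruct (var_has j w2 n2 G2) as [V2 V2p].
  set (m1 := Mean j w1) in *. set (m2 := Mean j w2) in *.
  assert (one : forall σ : list St, 0 <= (fun _ : list St => 1) σ) by (intros; simpl; lra).
  assert (sq : forall m σ, 0 <= (fun σ => (Ncount j σ - m) ^ 2) σ) by (intros; simpl; apply pow2_ge_0).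
  pose proof (pair_term _ _ _ _ (sq m1) one V1 has2) as P1.
  pose proof (pair_term _ _ _ _ one (sq m2) has1 V2) as P2.
  pose proof (pair_term _ _ _ _ Nnn Nnn M1 M2) as P3.
  pose proof (pair_term _ _ _ _ one one has1 has2) as P4.
  pose proof (pair_term (Ncount j) (fun _ => 1) _ _ Nnn one M1 has2) as A1.
  pose proof (pair_term (fun _ => 1) (Ncount j) _ _ one Nnn has1 M2) as A2.
  simpl in *.
  assert (m12 : 0 <= m1 * m2) by (apply Rmult_le_pos; auto).
  apply has_sum_scal with (c := 2) in P3; [|lra].
  apply has_sum_scal with (c := 2 * m1 * m2) in P4; [|lra].
  apply has_sum_scal with (c := 2 * m2) in A1; [|lra].
  apply has_sum_scal with (c := 2 * m1) in A2; [|lra].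
  assert (nn : forall (c : R) (h : list St * list St -> R), 0 <= c -> (forall x, 0 <= h x) -> forall x, 0 <= c * (W x * h x)).
  { intros. apply Rmult_le_pos; auto. apply Rmult_le_pos; auto using Wnn. }
  assert (HG : has_sum (fun x => W x * (2 * m1 * Ncount j (snd x) + 2 * m2 * Ncount j (fst x)))
                 (2 * m1 * (1 * m2) + 2 * m2 * (m1 * 1))).
  { refine (hs_plus _ _ _ _ _ _ _ _ A2 A1 _ _).
    - apply nn; [lra|intros; simpl; rewrite Rmult_1_l; apply Nnn].
    - apply nn; [lra|intros; simpl; rewrite Rmult_1_r; apply Nnn].
    - intros; simpl; ring.
    - reflexivity. }
  assert (H12 : has_sum (fun x => W x * ((Ncount j (fst x) - m1) ^ 2 + (Ncount j (snd x) - m2) ^ 2))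
                 (Var j w1 * 1 + 1 * Var j w2)).
  { refine (hs_plus _ _ _ _ _ _ _ _ P1 P2 _ _).
    - intros; apply Rmult_le_pos; auto using Wnn; rewrite Rmult_1_r; apply pow2_ge_0.
    - intros; apply Rmult_le_pos; auto using Wnn; rewrite Rmult_1_l; apply pow2_ge_0.
    - intros; simpl; ring.
    - reflexivity. }
  assert (H34 : has_sum (fun x => W x * (2 * (Ncount j (fst x) * Ncount j (snd x)) + 2 * m1 * m2))
                 (2 * (m1 * m2) + 2 * m1 * m2 * (1 * 1))).
  { refine (hs_plus _ _ _ _ _ _ _ _ P3 P4 _ _).
    - apply nn; [lra|intros; apply Rmult_le_pos; apply Nnn].
    - apply nn; [lra|intros; lra].
    - intros; simpl; ring.
    - reflexivity. }
  assert (HH : has_sum (fun x => W x * ((Ncount j (fst x) - m1) ^ 2 + (Ncount j (snd x) - m2) ^ 2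
                  + 2 * (Ncount j (fst x) * Ncount j (snd x)) + 2 * m1 * m2))
                 ((Var j w1 * 1 + 1 * Var j w2) + (2 * (m1 * m2) + 2 * m1 * m2 * (1 * 1)))).
  { refine (hs_plus _ _ _ _ _ _ _ _ H12 H34 _ _).
    - intros x; apply Rmult_le_pos; auto using Wnn; pose proof (pow2_ge_0 (Ncount j (fst x) - m1));
           pose proof (pow2_ge_0 (Ncount j (snd x) - m2)); lra.
    - intros x; apply Rmult_le_pos; auto using Wnn; pose proof (Nnn (fst x)); pose proof (Nnn (snd x)); nra.
    - intros; simpl; ring.
    - reflexivity. }
  assert (HF : has_sum (fun x => W x * (Ncount j (fst x ++ snd x) - (m1 + m2)) ^ 2)
     (((Var j w1 * 1 + 1 * Var j w2) + (2 * (m1 * m2) + 2 * m1 * m2 * (1 * 1)))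
       - (2 * m1 * (1 * m2) + 2 * m2 * (m1 * 1)))).
  { refine (has_sum_minus _ _ _ _ _ _ _ _ HH HG).
    - intros; apply Rmult_le_pos; auto using Wnn; apply pow2_ge_0.
    - intros x; apply Rmult_le_pos; auto using Wnn; pose proof (Nnn (fst x)); pose proof (Nnn (snd x)); nra.
    - intros; simpl; rewrite N_app; ring. }
  apply (transfer (fun σ => (Ncount j σ - (m1 + m2)) ^ 2)) in HF.
  unfold Var at 1. rewrite prod_mean. fold m1 m2. apply tsum_eq. eapply hs_eqv; [exact HF|]. ring.
Qed.

End Prod.

Lemma tsum_nonneg {T} (f : T -> R) : 0 <= tsum f.
Proof.
  unfold tsum. destruct (excluded_middle_informative _) as [e|]; [|lra].
  destruct (constructive_indefinite_description _ e) as [v Hv]. simpl. eapply has_sum_nonneg; eauto.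
Qed.

Lemma tsum_zero {T} (f : T -> R) : (forall x, f x = 0) -> tsum f = 0.
Proof. intros H. apply tsum_eq. apply has_sum_zero; auto. Qed.

Section Main.
Context {St : Type} (p : R -> St -> St -> R) (Hp : transition_function p)
  (Q : St -> St -> R) (HQ : qmatrix_of p Q) (j : St).

Definition mu (l : R) (law : St -> list St -> R) (k : St) (τ : list St) :=
  tsum (fun s => p l k s * law s τ).

Lemma mu_pt l law k τ n : 0 <= l -> (forall s, good (law s) n) ->
  has_sum (fun s => p l k s * law s τ) (mu l law k τ).
Proof.
  intros Hl Hg. destruct (has_sum_le_exists (fun s => p l k s * law s τ) (p l k) 1) as [v [Hv _]].
  - intros; apply Rmult_le_pos; [apply p_nonneg; auto|apply Hg].
  - intros s. rewrite <- (Rmult_1_r (p l k s)) at 2. apply Rmult_le_compat_l; [apply p_nonneg; auto|].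
    apply has_sum_single_le with (v := 1). apply Hg.
  - apply (tf_stoch _ Hp); auto.
  - unfold mu. rewrite (tsum_eq _ _ Hv). auto.
Qed.

Lemma edge_sum l law k n (h : list St -> R) (e : St -> R) v : 0 <= l -> (forall s, good (law s) n) ->
  (forall τ, 0 <= h τ) -> (forall s, has_sum (fun τ => law s τ * h τ) (e s)) ->
  has_sum (fun s => p l k s * e s) v -> has_sum (fun τ => mu l law k τ * h τ) v.
Proof.
  intros Hl Hg Hh He Hv.
  destruct (tonelli (fun s τ => p l k s * (law s τ * h τ)) (fun s => p l k s * e s) v) as [H [H1 H2]].
  - intros; apply Rmult_le_pos; [apply p_nonneg; auto|apply Rmult_le_pos; auto; apply Hg].
  - intros s. apply has_sum_scal; auto. apply p_nonneg; auto.
  - exact Hv.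
  - eapply has_sum_ext; [|exact H2]. intros τ. simpl.
    pose proof (has_sum_scal _ (h τ) _ (Hh τ) (mu_pt l law k τ n Hl Hg)).
    apply (has_sum_ext _ (fun s => p l k s * (law s τ * h τ))) in H0; [|intros; ring].
    rewrite (has_sum_unique _ _ _ (H1 τ) H0). ring.
Qed.

Lemma edge_good l law k n : 0 <= l -> (forall s, good (law s) n) -> good (mu l law k) n.
Proof.
  intros Hl Hg. split; [|split].
  - intros; apply tsum_nonneg.
  - intros τ Hne. apply NNPP. intro Hlen. apply Hne. unfold mu. apply tsum_zero. intros s.
    destruct (Req_dec (law s τ) 0) as [->|Hz]; [ring|]. exfalso. apply Hlen. apply (proj1 (proj2 (Hg s))); auto.
  - assert (H1 : forall s, has_sum (fun τ => law s τ * 1) 1).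
    { intros s. eapply has_sum_ext; [|apply (proj2 (proj2 (Hg s)))]. intros; simpl; ring. }
    assert (H2 : has_sum (fun s => p l k s * 1) 1).
    { eapply has_sum_ext; [|apply (tf_stoch _ Hp l k Hl)]. intros; simpl; ring. }
    pose proof (edge_sum l law k n (fun _ => 1) (fun _ => 1) 1 Hl Hg ltac:(intros; lra) H1 H2) as H.
    eapply has_sum_ext; [|exact H]. intros; simpl; ring.
Qed.

Lemma var_small w : good w 1 -> Var j w <= / 4.
Proof.
  intros Hg. destruct (E_bound w 1 (fun σ => (Ncount j σ - / 2) ^ 2) (/ 4) Hg) as [v [Hv Hv']].
  - lra.
  - intros; apply pow2_ge_0.
  - intros σ Hl. pose proof (N_bounds j σ). rewrite Hl in H. simpl in H. nra.
  - apply Rle_trans with v; [|lra]. eapply var_le; eauto. lra.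
Qed.

Lemma point_mass (w : list St -> R) a : w a = 1 -> (forall σ, σ <> a -> w σ = 0) ->
  good w (length a) /\ Var j w = 0.
Proof.
  intros Ha Hs.
  assert (Hw : forall σ, 0 <= w σ) by (intros σ; destruct (dec σ a) as [->|n]; [lra|rewrite Hs; auto; lra]).
  assert (G : good w (length a)).
  { split; [|split]; auto.
    - intros σ Hne. destruct (dec σ a) as [->|n]; auto. exfalso; auto.
    - rewrite <- Ha. apply has_sum_single; auto. }
  split; auto. destruct (var_has j w _ G) as [HV _].
  assert (Hm : has_sum (fun σ => w σ * Ncount j σ) (w a * Ncount j a)).
  { apply (has_sum_single (fun σ => w σ * Ncount j σ) a). rewrite Ha; rewrite Rmult_1_l; apply N_bounds.
    intros σ n; rewrite Hs; auto; ring. }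
  destruct (mean_has j w _ G) as [Hm' _]. rewrite (has_sum_unique _ _ _ Hm' Hm) in HV.
  assert (H0 : has_sum (fun σ => w σ * (Ncount j σ - w a * Ncount j a) ^ 2) 0).
  { apply has_sum_zero. intros σ. destruct (dec σ a) as [->|n]. rewrite Ha; ring. rewrite Hs; auto; ring. }
  apply (has_sum_unique _ _ _ HV H0).
Qed.

Lemma edge_var l law k n : 0 < l -> (forall s, good (law s) n) ->
  Var j (mu l law k) <= p l k k * Var j (law k) + (1 - p l k k) * INR n ^ 2.
Proof.
  intros Hl Hg.
  set (a := Mean j (law k)).
  assert (Ha : 0 <= a <= INR n) by (apply (mean_has j _ n (Hg k))).
  set (e := fun s => tsum (fun τ => law s τ * (Ncount j τ - a) ^ 2)).
  assert (He : forall s, has_sum (fun τ => law s τ * (Ncount j τ - a) ^ 2) (e s) /\ 0 <= e s <= INR n ^ 2).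
  { intros s. destruct (E_bound (law s) n (fun τ => (Ncount j τ - a) ^ 2) (INR n ^ 2) (Hg s)) as [v [Hv Hv']].
    - apply pow2_ge_0.
    - intros; apply pow2_ge_0.
    - intros τ Hlen. pose proof (N_bounds j τ). rewrite Hlen in H.
      assert (0 <= (INR n - (Ncount j τ - a)) * (INR n + (Ncount j τ - a))) by (apply Rmult_le_pos; lra).
      nra.
    - unfold e. rewrite (tsum_eq _ _ Hv). auto. }
  assert (Hpn : forall s, 0 <= p l k s) by (intros; apply (p_nonneg p Hp); lra).
  assert (Hp1 : has_sum (p l k) 1) by (apply (tf_stoch _ Hp); lra).
  destruct (has_sum_le_exists (fun s => p l k s * e s) (fun s => INR n ^ 2 * p l k s) (INR n ^ 2 * 1)) as [v [Hv _]].
  - intros s; apply Rmult_le_pos; auto. apply He.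
  - intros s. rewrite Rmult_comm. apply Rmult_le_compat_r; auto. apply He.
  - apply has_sum_scal; auto. apply pow2_ge_0.
  - assert (Hmu : has_sum (fun τ => mu l law k τ * (Ncount j τ - a) ^ 2) v).
    { apply (edge_sum l law k n _ e); auto. lra. intros; apply pow2_ge_0. intros s; apply He. }
    assert (HV : Var j (mu l law k) <= v).
    { eapply var_le; [apply (edge_good l law k n); auto; lra| |exact Hmu]. lra. }
    assert (Hek : e k = Var j (law k)) by reflexivity.
    assert (S1 : has_sum (fun s => Defs.ind (s = k) * (p l k s * e s)) (p l k k * e k)).
    { replace (p l k k * e k) with (Defs.ind (k = k) * (p l k k * e k)) by (rewrite ind_true; auto; ring).
      apply (has_sum_single (fun s => Defs.ind (s = k) * (p l k s * e s)) k).
      - apply Rmult_le_pos; [apply ind01|apply Rmult_le_pos; auto; apply He].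
      - intros x Hx. rewrite ind_false; auto; ring. }
    assert (S2 : has_sum (fun s => Defs.ind (s = k) * p l k s) (p l k k)).
    { eapply hs_eqv; [apply (has_sum_single (fun s => Defs.ind (s = k) * p l k s) k)|rewrite ind_true; auto; ring].
      - apply Rmult_le_pos; [apply ind01|auto].
      - intros x Hx. rewrite ind_false; auto; ring. }
    assert (S3 : has_sum (fun s => (1 - Defs.ind (s = k)) * p l k s) (1 - p l k k)).
    { refine (has_sum_minus _ _ _ _ _ _ _ _ Hp1 S2).
      - intros s; apply Rmult_le_pos; auto. pose proof (ind01 (s = k)); lra.
      - intros s; apply Rmult_le_pos; auto. apply ind01.
      - intros; ring. }
    apply has_sum_scal with (c := INR n ^ 2) in S3; [|apply pow2_ge_0].
    assert (S4 : has_sum (fun s => Defs.ind (s = k) * (p l k s * e s) + INR n ^ 2 * ((1 - Defs.ind (s = k)) * p l k s))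
                  (p l k k * e k + INR n ^ 2 * (1 - p l k k))).
    { refine (has_sum_plus _ _ _ _ _ _ S1 S3).
      - intros s; apply Rmult_le_pos; [apply ind01|apply Rmult_le_pos; auto; apply He].
      - intros s; apply Rmult_le_pos; [apply pow2_ge_0|apply Rmult_le_pos; auto; pose proof (ind01 (s = k)); lra]. }
    assert (Hle : v <= p l k k * e k + INR n ^ 2 * (1 - p l k k)).
    { refine (has_sum_le _ _ _ _ _ Hv S4). intros s. simpl.
      destruct (dec s k) as [->|Hne].
      - rewrite ind_true; auto. lra.
      - rewrite ind_false; auto. assert (e s <= INR n ^ 2) by apply He.
        assert (p l k s * e s <= p l k s * INR n ^ 2) by (apply Rmult_le_compat_l; auto). lra. }
    rewrite <- Hek. lra.
Qed.

End Main.

Lemma pw (l cl eps M : R) : 0 <= cl -> 0 < l -> 0 <= eps -> eps <= 1 -> eps <= M * Rmin l 1 -> 1 <= M ->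
  eps / M <= Rmin (l + cl) 1 - (1 - eps) * Rmin (0 + cl) 1.
Proof.
  intros Hc Hl He He1 HeM HM.
  assert (HeM' : eps / M <= Rmin l 1).
  { apply Rmult_le_reg_l with M; [lra|]. field_simplify; [lra|lra]. }
  assert (eps / M <= eps).
  { unfold Rdiv. rewrite <- (Rmult_1_r eps) at 2. apply Rmult_le_compat_l; auto.
    rewrite <- Rinv_1. apply Rinv_le_contravar; lra. }
  rewrite Rplus_0_l.
  pose proof (Rmin_l l 1). pose proof (Rmin_r l 1).
  destruct (Rle_dec (l + cl) 1).
  - rewrite Rmin_left by auto. rewrite Rmin_left by lra. nra.
  - rewrite Rmin_right by lra. pose proof (Rmin_r cl 1). pose proof (Rmin_glb cl 1 0 Hc ltac:(lra)).
    nra.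
Qed.

Section Main2.
Context {St : Type} (p : R -> St -> St -> R) (Hp : transition_function p)
  (Q : St -> St -> R) (HQ : qmatrix_of p Q) (j : St).

Definition MM (k : St) := Rmax (- Q k k) 1.

Lemma Dsum_nonneg c l : 0 <= l -> pos_lengths c -> 0 <= Dsum c l.
Proof.
  intros Hl Hc. unfold Dsum.
  pose proof (PS_ge (fun x y => Rmin (l + common_length x y) 1) 0 (leaves c)).
  rewrite Rmult_0_l in H. apply H. intros x y Hx _.
  pose proof (cl_nonneg x y (leaves_nn c Hc x Hx)). apply Rmin_glb; lra.
Qed.

Lemma child_bound c l k : 0 < l -> pos_lengths c -> (forall s, good (leaf_law p c s) (nleaves c)) ->
  Var j (leaf_law p c k) <= INR (nleaves c) / 4 + 2 * MM k * Dsum c 0 ->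
  Var j (mu p l (leaf_law p c) k) <= INR (nleaves c) / 4 + 2 * MM k * Dsum c l.
Proof.
  intros Hl Hc Hg IH.
  assert (HM : 1 <= MM k) by apply Rmax_r.
  assert (HD : 0 <= Dsum c l) by (apply Dsum_nonneg; auto; lra).
  destruct (Nat.eq_dec (nleaves c) 1) as [E1|E1].
  - rewrite E1. pose proof (var_small j (mu p l (leaf_law p c) k)) as V.
    rewrite <- E1 in V. specialize (V (edge_good p Hp l _ k _ ltac:(lra) Hg)). simpl. nra.
  - pose proof (edge_var p Hp j l (leaf_law p c) k (nleaves c) Hl Hg) as V.
    set (pi := p l k k) in *. set (n := nleaves c) in *.
    pose proof (eps_bound p Hp Q HQ k l Hl) as [Ee1 Ee2]. fold pi in Ee1, Ee2.
    assert (Hpi : 0 <= pi) by (apply (p_nonneg p Hp); lra).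
    assert (HPS : (1 - pi) / MM k * (INR n * (INR n - 1)) <= Dsum c l - pi * Dsum c 0).
    { unfold Dsum. rewrite <- PS_lin. unfold n. rewrite <- length_leaves.
      apply PS_ge. intros x y Hx _.
      pose proof (cl_nonneg x y (leaves_nn c Hc x Hx)).
      pose proof (pw l (common_length x y) (1 - pi) (MM k) H Hl Ee1 ltac:(lra) Ee2 HM).
      replace (1 - (1 - pi)) with pi in H0 by ring. exact H0. }
    assert (Hn : (INR n) ^ 2 <= 2 * (INR n * (INR n - 1))).
    { destruct n as [|[|n']]. simpl; lra. lia. rewrite !S_INR. pose proof (pos_INR n'). nra. }
    assert (Hpi1 : pi <= 1) by lra.
    assert (HV : pi * Var j (leaf_law p c k) <= pi * (INR n / 4 + 2 * MM k * Dsum c 0))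
      by (apply Rmult_le_compat_l; auto).
    assert (HPS' : 2 * MM k * ((1 - pi) / MM k * (INR n * (INR n - 1))) <= 2 * MM k * (Dsum c l - pi * Dsum c 0))
      by (apply Rmult_le_compat_l; lra).
    replace (2 * MM k * ((1 - pi) / MM k * (INR n * (INR n - 1)))) with (2 * (1 - pi) * (INR n * (INR n - 1))) in HPS'
      by (field; lra).
    assert ((1 - pi) * INR n ^ 2 <= (1 - pi) * (2 * (INR n * (INR n - 1)))) by (apply Rmult_le_compat_l; lra).
    pose proof (pos_INR n).
    assert (pi * (INR n / 4) <= INR n / 4) by nra.
    nra.
Qed.
End Main2.

Section Main3.
Context {St : Type} (p : R -> St -> St -> R) (Hp : transition_function p)
  (Q : St -> St -> R) (HQ : qmatrix_of p Q) (j : St).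

Definition PP (t : tree) : Prop := pos_lengths t ->
  (forall k, good (leaf_law p t k) (nleaves t)) /\
  (forall k, Var j (leaf_law p t k) <= INR (nleaves t) / 4 + 2 * MM Q k * Dsum t 0).

Lemma go_list k cs : Forall (fun lc => PP (snd lc)) cs -> pos_lengths (Node cs) ->
  good (golaw p k cs) (nl cs) /\ Var j (golaw p k cs) <= INR (nl cs) / 4 + 2 * MM Q k * sumD cs.
Proof.
  induction cs as [|[l c] r IH]; intros HF Hpos.
  - destruct (point_mass j (golaw p k []) []) as [G V].
    + reflexivity.
    + intros σ Hne. destruct σ; [congruence|reflexivity].
    + split; [exact G|]. rewrite V. simpl. lra.
  - inversion HF as [|? ? Hc Hr]; subst. simpl in Hc.
    apply pos_lengths_cons in Hpos. destruct Hpos as [Hl [Hcp Hrp]].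
    destruct (IH Hr Hrp) as [Gr Vr]. destruct (Hc Hcp) as [Gc Vc].
    pose proof (edge_good p Hp l (leaf_law p c) k _ ltac:(lra) Gc) as G1.
    assert (Eq : golaw p k ((l, c) :: r) =
      fun σ => mu p l (leaf_law p c) k (firstn (nleaves c) σ) * golaw p k r (skipn (nleaves c) σ)).
    { apply functional_extensionality; intros σ; reflexivity. }
    rewrite Eq. split.
    + cbn [nl]. apply prod_good; auto.
    + rewrite (prod_var j _ _ _ _ G1 Gr). cbn [nl sumD]. rewrite plus_INR.
      pose proof (child_bound p Hp Q HQ j c l k Hl Hcp Gc (Vc k)). lra.
Qed.

Lemma tree_main t : PP t.
Proof.
  induction t as [cs IH] using tree_ind2. intros Hpos. destruct cs as [|x r].
  - assert (Hk : forall k, good (leaf_law p (Node []) k) 1 /\ Var j (leaf_law p (Node []) k) = 0).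
    { intros k. apply (point_mass j (leaf_law p (Node []) k) [k]).
      - simpl. apply ind_true; auto.
      - intros σ Hne. destruct σ as [|x [|y σ']]; simpl; auto.
        apply ind_false. intros ->; auto. }
    split; intros k; destruct (Hk k) as [G V]; auto.
    rewrite V. assert (0 <= Dsum (Node []) 0) by (apply Dsum_nonneg; simpl; auto; lra).
    assert (1 <= MM Q k) by apply Rmax_r. simpl nleaves. simpl INR. nra.
  - assert (Eq : forall k, leaf_law p (Node (x :: r)) k = golaw p k (x :: r)).
    { intros k; apply functional_extensionality; intros σ; apply leaf_law_node. }
    rewrite nleaves_node, Dsum_node.
    split; intros k; rewrite Eq; apply go_list; auto.
Qed.
End Main3.

Theorem mainTheorem8 (S : Type) (p : R -> S -> S -> R) (Q : S -> S -> R)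
  (HS : countable S) (Hp : transition_function p) (HQ : qmatrix_of p Q)
  (T : tree) (HT : pos_lengths T) (HL : (2 <= nleaves T)%nat) (i j : S) :
  var_N p T i j <=
    / 4 * INR (nleaves T)
    + 2 * Rmax (- Q i i) 1 * spread T * INR (nleaves T) ^ 2.
Proof.
  destruct (tree_main p Hp Q HQ j T HT) as [_ V].
  specialize (V i). change (var_N p T i j) with (Var j (leaf_law p T i)).
  unfold MM in V. rewrite spread_eq.
  set (n := INR (nleaves T)) in *.
  assert (Hn : 2 <= n) by (unfold n; apply le_INR in HL; simpl in HL; lra).
  assert (HD : 0 <= Dsum T 0) by (apply Dsum_nonneg; auto; lra).
  assert (HM : 1 <= Rmax (- Q i i) 1) by apply Rmax_r.
  replace (2 * Rmax (- Q i i) 1 * (Dsum T 0 / (n * (n - 1))) * n ^ 2)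
    with (2 * Rmax (- Q i i) 1 * Dsum T 0 * (n / (n - 1))) by (field; lra).
  assert (1 <= n / (n - 1)).
  { apply Rmult_le_reg_r with (n - 1); [lra|]. field_simplify; lra. }
  assert (0 <= 2 * Rmax (- Q i i) 1 * Dsum T 0) by (apply Rmult_le_pos; lra).
  nra.
Qed.
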